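(* Fix $\ell\geq2$, let $A=\ell\times\omega$, and fix a recursive bijection $\psi:(\ell-1)\times\omega\times\omega\to\omega$. For $\alpha\in\{0,1\}^\omega$ define the binary relation $S_\alpha$ on $A$ by: $S_\alpha(a,b)$ holds iff $a=(i,n)$, $b=(i+1,m)$ for some $i<\ell-1$, $n,m\in\omega$ with $\alpha_{\psi(i,n,m)}=1$. Let $G$ be the set of $\alpha\in\{0,1\}^\omega$ such that $\langle A,S_\alpha,\{0\}\times\omega,\ldots,\{\ell-1\}\times\omega\rangle$ (interpreting $L_j$ as $\{j\}\times\omega$ and $S$ as $S_\alpha$) is a model of the theory $T_\ell$. Then $G$ is a $\Pi^0_2$ subset of $\{0,1\}^\omega$.
   Context: The signature has unary relations $L_0,\ldots,L_{\ell-1}$ and a binary relation $S$. The theory $T_\ell$ consists of: (i) every $x$ satisfies some $L_j(x)$; (ii) no $x$ satisfies $L_i(x)\wedge L_j(x)$ for $i<j$; (iii) $S(x,y)$ and $L_i(x)$ with $i\le \ell-2$ imply $L_{i+1}(y)$; (iv) extension axioms: for each $i<\ell$ and all finite sets $X,Y\subseteq L_{i+1}$ with $X\cap Y=\emptyset$, $Z\subseteq L_i$, and $X',Y'\subseteq L_{i-1}$ with $X'\cap Y'=\emptyset$ (where $L_{-1}$ and $L_\ell$ are read as the empty set), there is $z\in L_i\setminus Z$ with $S(z,x)$ for all $x\in X$, $S(x',z)$ for all $x'\in X'$, $\neg S(z,y)$ for all $y\in Y$ and $\neg S(y',z)$ for all $y'\in Y'$ (one first-order axiom for each $i$ and each tuple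 of cardinalities $(|X|,|Y|,|Z|,|X'|,|Y'|)$). $\Pi^0_2$ refers to the arithmetical hierarchy on subsets of Cantor space $\{0,1\}^\omega$. *)

(* Defs.v *)
From Stdlib Require Import List.
From mathcomp Require Import all_boot.

Set Implicit Arguments.
Unset Strict Implicit.
Unset Printing Implicit Defensive.

Inductive rcode : Type :=
| RZero : rcode
| RSucc : rcode
| RProj : nat -> rcode
| RComp : rcode -> list rcode -> rcode
| RPrec : rcode -> rcode -> rcode
| RMin  : rcode -> rcode.

Inductive eval : rcode -> list nat -> nat -> Prop :=
| ev_zero xs : eval RZero xs 0
| ev_succ x xs : eval RSucc (x :: xs) (S x)
| ev_proj i xs : eval (RProj i) xs (List.nth i xs 0)
| ev_comp f gs xs ys y :
    Forall2 (fun g v => eval g xs v) gs ys ->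
    eval f ys y -> eval (RComp f gs) xs y
| ev_prec0 f g xs y : eval f xs y -> eval (RPrec f g) (0 :: xs) y
| ev_precS f g n xs z y :
    eval (RPrec f g) (n :: xs) z -> eval g (n :: z :: xs) y ->
    eval (RPrec f g) (S n :: xs) y
| ev_min f xs n :
    eval f (n :: xs) 0 ->
    (forall m, m < n -> exists k, eval f (m :: xs) (S k)) ->
    eval (RMin f) xs n.

(* Cantor space {0,1}^ω = nat -> bool (true = 1), and lightface Π^0_2. *)

(* Code of the finite binary string alpha|m = (alpha 0,...,alpha (m-1)):
   binary expansion with a leading 1 (a recursive bijection between
   finite binary strings and positive naturals). *)
Definition prefix_code (alpha : nat -> bool) (m : nat) : nat :=
  2 ^ m + \sum_(i < m) (alpha i) * 2 ^ i.

(* G is Π^0_2: there is a total recursive R with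
   alpha ∈ G  <->  forall k, exists m, R(k, alpha|m) = 0. *)
Definition Pi02 (G : (nat -> bool) -> Prop) : Prop :=
  exists e : rcode,
    (forall k c, exists y, eval e [:: k; c] y) /\
    (forall alpha, G alpha <-> forall k, exists m, eval e [:: k; prefix_code alpha m] 0).

(* L j is the interpretation of L_j (only j < l is used); finite sets *)
(* are given by lists.                                                 *)

Definition subset_of {M : Type} (X : list M) (P : M -> Prop) : Prop :=
  forall x, List.In x X -> P x.

Definition disjoint_lists {M : Type} (X Y : list M) : Prop :=
  forall x, List.In x X -> ~ List.In x Y.

Definition model_T (l : nat) (M : Type) (L : nat -> M -> Prop)
    (S : M -> M -> Prop) : Prop :=
  (* L_j with the conventions L_{-1} = L_l = ∅ *)
  let Lup := fun (i : nat) (x : M) => i.+1 < l /\ L i.+1 x in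
  let Ldown := fun (i : nat) (x : M) => 0 < i /\ L i.-1 x in
  (forall x, exists j, j < l /\ L j x) /\
  (forall x i j, i < j -> j < l -> ~ (L i x /\ L j x)) /\
  (forall x y i, i <= l - 2 -> S x y -> L i x -> L i.+1 y) /\
  (forall i, i < l ->
     forall X Y Z X' Y' : list M,
       subset_of X (Lup i) -> subset_of Y (Lup i) -> disjoint_lists X Y ->
       subset_of Z (L i) ->
       subset_of X' (Ldown i) -> subset_of Y' (Ldown i) -> disjoint_lists X' Y' ->
       exists z, L i z /\ ~ List.In z Z /\
         (forall x, List.In x X -> S z x) /\
         (forall x', List.In x' X' -> S x' z) /\
         (forall y, List.In y Y -> ~ S z y) /\
         (forall y', List.In y' Y' -> ~ S y' z)).

Definition A (l : nat) : Type := ('I_l * nat)%type.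

Definition LA (l : nat) (j : nat) (a : A l) : Prop := nat_of_ord a.1 = j.

Definition S_alpha (l : nat) (psi : nat -> nat -> nat -> nat)
    (alpha : nat -> bool) (a b : A l) : Prop :=
  nat_of_ord a.1 < l - 1 /\ nat_of_ord b.1 = (nat_of_ord a.1).+1 /\
  alpha (psi (nat_of_ord a.1) a.2 b.2) = true.

Definition recursive_bijection (l : nat) (psi : nat -> nat -> nat -> nat) : Prop :=
  (exists e : rcode, forall i n m, i < l - 1 -> eval e [:: i; n; m] (psi i n m)) /\
  (forall i n m i' n' m', i < l - 1 -> i' < l - 1 ->
      psi i n m = psi i' n' m' -> i = i' /\ n = n' /\ m = m') /\
  (forall k, exists i n m, i < l - 1 /\ psi i n m = k).

(* Main.v *)
Require Import Defs.
From Stdlib Require Import List.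
From mathcomp Require Import all_boot.
From mathcomp Require Import zify.

Set Implicit Arguments.
Unset Strict Implicit.
Unset Printing Implicit Defensive.

Lemma eval_det : forall e xs y, eval e xs y -> forall y', eval e xs y' -> y = y'.
Proof.
fix IH 4.
intros e xs y H y' H'.
destruct H.
- inversion H'; subst; reflexivity.
- inversion H'; subst; reflexivity.
- inversion H'; subst; reflexivity.
- inversion H'; subst.
  assert (Hys : ys = ys0).
  { clear H0 H' H6.
    revert ys0 H3.
    induction H as [|g v gs vs Hgv Hrest IH2]; intros ys0 H4.
    + inversion H4; reflexivity.
    + inversion H4; subst. f_equal; [exact (IH _ _ _ Hgv _ H1) | exact (IH2 _ H3)]. }
  subst. exact (IH _ _ _ H0 _ H6).
- inversion H'; subst. exact (IH _ _ _ H _ H4).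
- inversion H'; subst.
  have Hz := IH _ _ _ H _ H6. subst. exact (IH _ _ _ H0 _ H7).
- inversion H'; subst.
  case: (ltngtP n y') => // Hlt.
  + destruct (H3 n Hlt) as [k Hk]. have := IH _ _ _ H _ Hk. discriminate.
  + destruct (H0 y' Hlt) as [k Hk]. have := IH _ _ _ Hk _ H2. discriminate.
Qed.


Definition env := nat -> nat.
Definition envof (xs : list nat) : env := fun i => List.nth i xs 0.
Definition scons (x : nat) (E : env) : env :=
  fun i => match i with 0 => x | S j => E j end.
Definition agree (N : nat) (E E' : env) := forall i, i < N -> E i = E' i.

Definition Comp (N : nat) (f : env -> nat) : Prop :=
  (exists e, forall xs, eval e xs (f (envof xs))) /\
  (forall E E', agree N E E' -> f E = f E').

Fixpoint pl (f : nat -> rcode) (j N : nat) : list rcode :=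
  match N with 0 => nil | S N => f j :: pl f (S j) N end.
Fixpoint vl (f : nat -> nat) (j N : nat) : list nat :=
  match N with 0 => nil | S N => f j :: vl f (S j) N end.

Lemma pl_eval xs (s : nat -> nat) j N :
  Forall2 (fun g v => eval g xs v) (pl (fun i => RProj (s i)) j N)
    (vl (fun i => List.nth (s i) xs 0) j N).
Proof. elim: N j => [|N IH] j /=; constructor; [exact: ev_proj | exact: IH]. Qed.

Lemma vl_nth f j N i : i < N -> List.nth i (vl f j N) 0 = f (j + i).
Proof.
elim: N j i => [|N IH] j [|i] //= H; first by rewrite addn0.
by rewrite IH // addSnnS.
Qed.

Lemma Comp_eq N f g : Comp N f -> (forall E, f E = g E) -> Comp N g.
Proof.
move=> [[e He] Hd] Hfg; split.
- exists e => xs; rewrite -Hfg; exact: He.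
- move=> E E' H; rewrite -!Hfg; exact: Hd.
Qed.

Lemma Comp_reindex N M (s : nat -> nat) f : Comp N f -> (forall i, i < N -> s i < M) ->
  Comp M (fun E => f (fun i => E (s i))).
Proof.
move=> [[e He] Hd] Hs; split.
- exists (RComp e (pl (fun i => RProj (s i)) 0 N)) => xs.
  apply: ev_comp; first exact: pl_eval.
  have -> : f (fun i => envof xs (s i)) = f (envof (vl (fun i => List.nth (s i) xs 0) 0 N)).
    by apply: Hd => i Hi; rewrite /envof vl_nth.
  exact: He.
- move=> E E' HE; apply: Hd => i Hi; apply: HE; exact: Hs.
Qed.

Lemma Comp_proj N i : i < N -> Comp N (fun E => E i).
Proof.
move=> Hi; split; first by exists (RProj i) => xs; exact: ev_proj.
move=> E E' H; exact: H.
Qed.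

Fixpoint ccode (n : nat) : rcode :=
  match n with 0 => RZero | S n => RComp RSucc [:: ccode n] end.

Lemma ccode_eval n xs : eval (ccode n) xs n.
Proof.
elim: n => [|n IH] /=; first exact: ev_zero.
apply: (@ev_comp _ _ _ [:: n]); first by constructor.
exact: ev_succ.
Qed.

Lemma Comp_const N n : Comp N (fun _ => n).
Proof. split; first by exists (ccode n) => xs; exact: ccode_eval. by []. Qed.

Lemma Comp_succ N f : Comp N f -> Comp N (fun E => S (f E)).
Proof.
move=> [[e He] Hd]; split.
- exists (RComp RSucc [:: e]) => xs.
  apply: (@ev_comp _ _ _ [:: f (envof xs)]); first by constructor.
  exact: ev_succ.
- by move=> E E' H; rewrite (Hd _ _ H).
Qed.

Lemma Comp_ext3 N ee (g : nat -> nat -> nat -> nat) a b c :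
  (forall x y z, eval ee [:: x; y; z] (g x y z)) ->
  Comp N a -> Comp N b -> Comp N c -> Comp N (fun E => g (a E) (b E) (c E)).
Proof.
move=> Hg [[ea Ha] Hda] [[eb Hb] Hdb] [[ec Hc] Hdc]; split.
- exists (RComp ee [:: ea; eb; ec]) => xs.
  apply: (@ev_comp _ _ _ [:: a (envof xs); b (envof xs); c (envof xs)]); last exact: Hg.
  by repeat constructor.
- by move=> E E' H; rewrite (Hda _ _ H) (Hdb _ _ H) (Hdc _ _ H).
Qed.

Fixpoint iterrec (b : nat) (st : nat -> nat -> nat) (k : nat) : nat :=
  match k with 0 => b | S k => st k (iterrec b st k) end.

Lemma iterrec_ext b st st' v : (forall k z, st k z = st' k z) ->
  iterrec b st v = iterrec b st' v.
Proof. by move=> H; elim: v => //= v ->. Qed.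

Lemma Comp_rec N n b s : Comp N n -> Comp N b -> Comp N.+2 s ->
  Comp N (fun E => iterrec (b E) (fun k z => s (scons k (scons z E))) (n E)).
Proof.
move=> [[en Hn] Hdn] [[eb Hb] Hdb] [[es Hs] Hds]; split.
- exists (RComp (RPrec eb es) (en :: pl (fun i => RProj i) 0 N)) => xs.
  set ys := vl (fun i => List.nth i xs 0) 0 N.
  have Hys : agree N (envof ys) (envof xs).
    by move=> i Hi; rewrite /envof /ys vl_nth.
  apply: (@ev_comp _ _ _ (n (envof xs) :: ys)).
    constructor; first exact: Hn.
    exact: (pl_eval xs id).
  elim: (n (envof xs)) => [|v IH] /=.
  + apply: ev_prec0. rewrite -(Hdb _ _ Hys). exact: Hb.
  + apply: ev_precS; first exact: IH.
    set z := iterrec _ _ v.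
    have -> : s (scons v (scons z (envof xs))) = s (envof [:: v, z & ys]).
      apply: Hds => -[|[|i]] //= Hi. by rewrite -Hys.
    exact: Hs.
- move=> E E' H; rewrite (Hdn _ _ H) (Hdb _ _ H).
  apply: iterrec_ext => k z; apply: Hds => -[|[|i]] //= Hi; exact: H.
Qed.


Lemma Comp_lift N f : Comp N f -> Comp N.+2 (fun E => f (fun i => E i.+2)).
Proof. move=> H; apply: (Comp_reindex (s := fun i => i.+2)) H _ => i; lia. Qed.

Lemma Comp_add N a b : Comp N a -> Comp N b -> Comp N (fun E => a E + b E).
Proof.
move=> Ha Hb.
have Hs : Comp N.+2 (fun E => S (E 1)) by apply: Comp_succ; apply: Comp_proj.
apply: Comp_eq (Comp_rec Hb Ha Hs) _ => E /=.
elim: (b E) => [|v IH] /=; by [rewrite addn0 | rewrite IH addnS].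
Qed.

Lemma Comp_mul N a b : Comp N a -> Comp N b -> Comp N (fun E => a E * b E).
Proof.
move=> Ha Hb.
have Hs : Comp N.+2 (fun E => E 1 + a (fun i => E i.+2)).
  apply: Comp_add; [exact: Comp_proj | exact: Comp_lift].
apply: Comp_eq (Comp_rec Hb (Comp_const N 0) Hs) _ => E /=.
elim: (b E) => [|v IH] /=; first by rewrite muln0.
by rewrite IH mulnS addnC.
Qed.

Lemma Comp_pred N a : Comp N a -> Comp N (fun E => (a E).-1).
Proof.
move=> Ha.
have Hs : Comp N.+2 (fun E => E 0) by apply: Comp_proj.
apply: Comp_eq (Comp_rec Ha (Comp_const N 0) Hs) _ => E /=.
by case: (a E).
Qed.

Lemma Comp_sub N a b : Comp N a -> Comp N b -> Comp N (fun E => a E - b E).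
Proof.
move=> Ha Hb.
have Hs : Comp N.+2 (fun E => (E 1).-1) by apply: Comp_pred; apply: Comp_proj.
apply: Comp_eq (Comp_rec Hb Ha Hs) _ => E /=.
elim: (b E) => [|v IH] /=; first by rewrite subn0.
by rewrite IH subnS.
Qed.

Definition CompB N (p : env -> bool) := Comp N (fun E => nat_of_bool (p E)).

Lemma CompB_leq N a b : Comp N a -> Comp N b -> CompB N (fun E => a E <= b E).
Proof.
move=> Ha Hb.
have Hs : Comp N.+2 (fun E => 0) by apply: Comp_const.
apply: Comp_eq (Comp_rec (Comp_sub Ha Hb) (Comp_const N 1) Hs) _ => E /=.
rewrite -subn_eq0; by case: (a E - b E).
Qed.

Lemma CompB_neg N p : CompB N p -> CompB N (fun E => ~~ p E).
Proof.
move=> Hp; apply: Comp_eq (Comp_sub (Comp_const N 1) Hp) _ => E; by case: (p E).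
Qed.

Lemma CompB_and N p q : CompB N p -> CompB N q -> CompB N (fun E => p E && q E).
Proof.
move=> Hp Hq; apply: Comp_eq (Comp_mul Hp Hq) _ => E; by case: (p E); case: (q E).
Qed.

Lemma CompB_or N p q : CompB N p -> CompB N q -> CompB N (fun E => p E || q E).
Proof.
move=> Hp Hq; apply: Comp_eq (CompB_neg (CompB_and (CompB_neg Hp) (CompB_neg Hq))) _ => E.
by case: (p E); case: (q E).
Qed.

Lemma CompB_impl N p q : CompB N p -> CompB N q -> CompB N (fun E => p E ==> q E).
Proof.
move=> Hp Hq; apply: Comp_eq (CompB_or (CompB_neg Hp) Hq) _ => E.
by case: (p E); case: (q E).
Qed.

Lemma CompB_eq N a b : Comp N a -> Comp N b -> CompB N (fun E => a E == b E).
Proof.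
move=> Ha Hb; apply: Comp_eq (CompB_and (CompB_leq Ha Hb) (CompB_leq Hb Ha)) _ => E.
by rewrite eqn_leq.
Qed.

Lemma CompB_odd N a : Comp N a -> CompB N (fun E => odd (a E)).
Proof.
move=> Ha.
have Hs : Comp N.+2 (fun E => 1 - E 1) by apply: Comp_sub; [apply: Comp_const | apply: Comp_proj].
apply: Comp_eq (Comp_rec Ha (Comp_const N 0) Hs) _ => E /=.
elim: (a E) => [|v IH] //=; rewrite IH; by case: (odd v).
Qed.

Lemma Comp_pow2 N a : Comp N a -> Comp N (fun E => 2 ^ (a E)).
Proof.
move=> Ha.
have Hs : Comp N.+2 (fun E => E 1 + E 1) by apply: Comp_add; apply: Comp_proj.
apply: Comp_eq (Comp_rec Ha (Comp_const N 1) Hs) _ => E /=.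
elim: (a E) => [|v IH] //=; by rewrite IH expnS mul2n addnn.
Qed.

Lemma Comp_div N a b : Comp N a -> Comp N b -> (forall E, 0 < b E) ->
  Comp N (fun E => a E %/ b E).
Proof.
move=> Ha Hb Hpos.
have Hs : Comp N.+2 (fun E => E 1 + nat_of_bool ((E 0).+1 * b (fun i => E i.+2) <= a (fun i => E i.+2))).
  apply: Comp_add; first exact: Comp_proj.
  apply: CompB_leq; last exact: Comp_lift.
  apply: Comp_mul; [apply: Comp_succ; exact: Comp_proj | exact: Comp_lift].
apply: Comp_eq (Comp_rec Ha (Comp_const N 0) Hs) _ => E /=.
have Hb0 := Hpos E.
suff H : forall v, iterrec 0 (fun k z => z + nat_of_bool (k.+1 * b E <= a E)) v = minn v (a E %/ b E).
  rewrite H; have := leq_div (a E) (b E); lia.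
elim=> [|v IH] /=; first by rewrite min0n.
rewrite IH -leq_divRL //; case: leqP => H; lia.
Qed.

Lemma Comp_mod N a b : Comp N a -> Comp N b -> (forall E, 0 < b E) ->
  Comp N (fun E => a E %% b E).
Proof.
move=> Ha Hb Hpos.
apply: Comp_eq (Comp_sub Ha (Comp_mul (Comp_div Ha Hb Hpos) Hb)) _ => E.
have := divn_eq (a E) (b E); lia.
Qed.

Lemma Comp_minn N a b : Comp N a -> Comp N b -> Comp N (fun E => minn (a E) (b E)).
Proof.
move=> Ha Hb; apply: Comp_eq (Comp_sub Ha (Comp_sub Ha Hb)) _ => E; lia.
Qed.

Lemma Comp_count N P B : CompB N.+1 P -> Comp N B ->
  Comp N (fun E => count (fun x => P (scons x E)) (iota 0 (B E))).
Proof.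
move=> HP HB.
have Hd : forall E E', agree N.+1 E E' -> P E = P E'.
  move=> E1 E2 H; have := HP.2 _ _ H; by case: (P E1); case: (P E2).
have Hs : Comp N.+2 (fun E => E 1 + nat_of_bool (P (fun i => E (if i is j.+1 then j.+2 else 0)))).
  apply: Comp_add; first exact: Comp_proj.
  apply: (Comp_reindex (s := fun i => if i is j.+1 then j.+2 else 0)) HP _ => -[|i] /=; lia.
apply: Comp_eq (Comp_rec HB (Comp_const N 0) Hs) _ => E /=.
elim: (B E) => [|v IH] //.
have -> : iota 0 v.+1 = iota 0 v ++ [:: v] by rewrite -addn1 iotaD.
rewrite count_cat /= IH addn0; congr (_ + _).
have -> // : P (fun i => scons v (scons (count (fun x => P (scons x E)) (iota 0 v)) E)
                   (if i is j.+1 then j.+2 else 0)) = P (scons v E).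
apply: Hd => -[|i] //.
Qed.

Lemma CompB_has N P B : CompB N.+1 P -> Comp N B ->
  CompB N (fun E => has (fun x => P (scons x E)) (iota 0 (B E))).
Proof.
move=> HP HB; apply: Comp_eq (CompB_leq (Comp_const N 1) (Comp_count HP HB)) _ => E.
by rewrite has_count.
Qed.

Lemma CompB_all N P B : CompB N.+1 P -> Comp N B ->
  CompB N (fun E => all (fun x => P (scons x E)) (iota 0 (B E))).
Proof.
move=> HP HB; apply: Comp_eq (CompB_neg (CompB_has (CompB_neg HP) HB)) _ => E.
congr (nat_of_bool _); elim: (iota 0 (B E)) => //= x s <-; by case: (P _).
Qed.


Lemma pcS f N : prefix_code f N.+1 = prefix_code f N + (1 + f N) * 2 ^ N.
Proof. rewrite /prefix_code big_ord_recr /= expnS mulnDl mul1n. lia. Qed.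

Lemma pc_bounds f N : 2 ^ N <= prefix_code f N < 2 ^ N.+1.
Proof.
elim: N => [|N IH]; first by rewrite /prefix_code big_ord0.
rewrite pcS !expnS; move: IH; rewrite expnS; case: (f N) => /=; lia.
Qed.

Lemma div_one x d : 0 < d -> d <= x < 2 * d -> x %/ d = 1.
Proof.
move=> Hd /andP [H1 H2].
have A : 1 <= x %/ d by rewrite leq_divRL // mul1n.
have B : x %/ d < 2 by rewrite ltn_divLR.
lia.
Qed.

Lemma pc_bit f N p : p < N -> odd (prefix_code f N %/ 2 ^ p) = f p.
Proof.
elim: N => [|N IH] //; rewrite ltnS leq_eqVlt => /orP [/eqP -> | Hp].
- rewrite pcS addnC divnMDl ?expn_gt0 //.
  rewrite (@div_one _ (2 ^ N)) ?expn_gt0 //; last first.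
    by have := pc_bounds f N; rewrite expnS.
  rewrite addn1 /=; case: (f N) => //.
- rewrite pcS.
  have -> : (1 + f N) * 2 ^ N = ((1 + f N) * 2 ^ (N - p)) * 2 ^ p.
    by rewrite -mulnA -expnD subnK // ltnW.
  rewrite addnC divnMDl ?expn_gt0 // oddD IH // oddM oddX.
  have -> : (N - p == 0) = false by apply/negbTE; rewrite subn_eq0 -ltnNge.
  by rewrite /= andbF.
Qed.

Lemma pc_known f N p : (2 ^ p.+1 <= prefix_code f N) = (p < N).
Proof.
have := pc_bounds f N => /andP [H1 H2].
case: (ltnP p N) => H.
- apply: leq_trans H1; by rewrite leq_exp2l.
- apply/negbTE; rewrite -ltnNge; apply: (leq_trans H2); by rewrite leq_exp2l.
Qed.


Definition bitn (c p : nat) : bool := odd (c %/ 2 ^ p).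
Definition known (c p : nat) : bool := 2 ^ p.+1 <= c.

Definition Good (l : nat) (psi : nat -> nat -> nat -> nat) (alpha : nat -> bool) :=
  forall i s, i < l -> exists n, s <= n /\ forall x, x < s ->
    ((i.+1 < l) -> alpha (psi i n x) = bitn s (2 * x)) /\
    ((0 < i) -> alpha (psi i.-1 x n) = bitn s (2 * x).+1).

Definition lb {M : Type} (f : M -> nat) (L : list M) : nat :=
  List.fold_right (fun a acc => (f a).+1 + acc) 0 L.

Lemma lb_in {M : Type} (f : M -> nat) (L : list M) a : List.In a L -> f a < lb f L.
Proof.
elim: L => [|b L IH] //= [-> | H]; first lia.
have := IH H; lia.
Qed.

Lemma pairA_eq l (a b : A l) : nat_of_ord a.1 = nat_of_ord b.1 -> a.2 = b.2 -> a = b.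
Proof.
case: a => a1 a2; case: b => b1 b2 /= H1 H2; congr pair => //; exact: val_inj.
Qed.

Definition snd2 l (a : A l) : nat := a.2.

Lemma lb_in2 l (L : list (A l)) a : List.In a L -> a.2 < lb (@snd2 l) L.
Proof. exact: (lb_in (@snd2 l)). Qed.

Lemma Good_model l psi alpha : 2 <= l -> Good l psi alpha ->
  model_T l (LA (l:=l)) (S_alpha psi alpha).
Proof.
move=> Hl2 HG; split; [|split; [|split]].
- move=> x; exists (nat_of_ord x.1); split; [exact: ltn_ord | by []].
- move=> x i j Hij Hj [H1 H2]; rewrite /LA in H1 H2; lia.
- move=> x y i _ [H1 [H2 H3]] Hx; rewrite /LA in Hx *; by rewrite H2 Hx.
move=> i Hi X Y Z X' Y' HX HY HXY HZ HX' HY' HXY'.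
pose K := lb (@snd2 l) X + lb (@snd2 l) Y + lb (@snd2 l) Z + lb (@snd2 l) X' + lb (@snd2 l) Y'.
pose g := fun j => if odd j then List.existsb (fun a : A l => a.2 == j./2) X'
                   else List.existsb (fun a : A l => a.2 == j./2) X.
pose s := prefix_code g (2 * K).
have HKs : K <= s.
  have := pc_bounds g (2 * K) => /andP [H1 _].
  have := ltn_expl (2 * K) (isT : 1 < 2). rewrite -/s. lia.
have Hbits : forall x, x < K -> bitn s (2 * x) = List.existsb (fun a : A l => a.2 == x) X /\
                                 bitn s (2 * x).+1 = List.existsb (fun a : A l => a.2 == x) X'.
  move=> x Hx; rewrite /bitn /s !pc_bit; try lia.
  rewrite /g mul2n /= odd_double /= doubleK; split => //.
  by rewrite uphalf_double.
have [n [Hsn Hn]] := HG i s Hi.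
exists (Ordinal Hi, n); split; first by [].
split.
  move=> Hin; have := lb_in2 Hin; rewrite /K /= in HKs *; lia.
split.
  move=> x Hin; have [Hl Hx1] := HX x Hin; rewrite /LA in Hx1.
  have HxK : x.2 < K by have := lb_in2 Hin; rewrite /K; lia.
  split; first by rewrite /=; lia.
  split; first by rewrite /= Hx1.
  have [H1 _] := Hn x.2 (leq_trans HxK (leq_trans HKs (leqnn _))).
  rewrite /= (H1 Hl).
  rewrite (proj1 (Hbits _ HxK)); apply/List.existsb_exists; exists x; split => //; exact: eqxx.
split.
  move=> x' Hin; have [Hl Hx1] := HX' x' Hin; rewrite /LA in Hx1.
  have HxK : x'.2 < K by have := lb_in2 Hin; rewrite /K; lia.
  split; first by rewrite Hx1; lia.
  split; first by rewrite /= Hx1; lia.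
  have [_ H1] := Hn x'.2 (leq_trans HxK HKs).
  rewrite Hx1 (H1 Hl).
  rewrite (proj2 (Hbits _ HxK)); apply/List.existsb_exists; exists x'; split => //; exact: eqxx.
split.
  move=> y Hin [_ [_ Ha]]; have [Hl Hy1] := HY y Hin; rewrite /LA in Hy1.
  have HyK : y.2 < K by have := lb_in2 Hin; rewrite /K; lia.
  have [H1 _] := Hn y.2 (leq_trans HyK HKs).
  move: Ha; rewrite /= (H1 Hl).
  rewrite (proj1 (Hbits _ HyK)) => /List.existsb_exists [a [Ha /eqP Ha2]].
  have [_ Ha1] := HX a Ha; rewrite /LA in Ha1.
  have Eay : a = y by apply: pairA_eq => //; rewrite Ha1 Hy1.
  by apply: (HXY a Ha); rewrite Eay.
move=> y Hin [_ [_ Ha]]; have [Hl Hy1] := HY' y Hin; rewrite /LA in Hy1.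
have HyK : y.2 < K by have := lb_in2 Hin; rewrite /K; lia.
have [_ H1] := Hn y.2 (leq_trans HyK HKs).
move: Ha; rewrite /= Hy1 (H1 Hl).
rewrite (proj2 (Hbits _ HyK)) => /List.existsb_exists [a [Ha /eqP Ha2]].
have [_ Ha1] := HX' a Ha; rewrite /LA in Ha1.
have Eay : a = y by apply: pairA_eq => //; rewrite Ha1 Hy1.
by apply: (HXY' a Ha); rewrite Eay.
Qed.


Lemma model_Good l psi alpha : 2 <= l ->
  model_T l (LA (l:=l)) (S_alpha psi alpha) -> Good l psi alpha.
Proof.
move=> Hl2 HM i s Hi.
have [_ [_ [_ H4]]] := HM.
pose oi := Ordinal Hi.
pose o1 := insubd oi i.+1.
pose om := insubd oi i.-1.
have Ho1 : i.+1 < l -> nat_of_ord o1 = i.+1 by move=> H; rewrite /o1 val_insubd H.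
have Hom : nat_of_ord om = i.-1 by rewrite /om val_insubd; have -> : i.-1 < l by lia.
pose X := if i.+1 < l then List.map (fun x => (o1, x)) (List.filter (fun x => bitn s (2 * x)) (List.seq 0 s)) else nil.
pose Y := if i.+1 < l then List.map (fun x => (o1, x)) (List.filter (fun x => ~~ bitn s (2 * x)) (List.seq 0 s)) else nil.
pose Z := List.map (fun x => (oi, x)) (List.seq 0 s).
pose X' := if 0 < i then List.map (fun x => (om, x)) (List.filter (fun x => bitn s (2 * x).+1) (List.seq 0 s)) else nil.
pose Y' := if 0 < i then List.map (fun x => (om, x)) (List.filter (fun x => ~~ bitn s (2 * x).+1) (List.seq 0 s)) else nil.
have HX : subset_of X (fun x : A l => i.+1 < l /\ LA i.+1 x).
  rewrite /X; case: ifP => Hl //= a /List.in_map_iff [x [<- _]]; split => //; exact: Ho1.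
have HY : subset_of Y (fun x : A l => i.+1 < l /\ LA i.+1 x).
  rewrite /Y; case: ifP => Hl //= a /List.in_map_iff [x [<- _]]; split => //; exact: Ho1.
have HXY : disjoint_lists X Y.
  rewrite /disjoint_lists /X /Y; case: ifP => Hl //= a /List.in_map_iff [x [<- /List.filter_In [_ Hb]]].
  move=> /List.in_map_iff [y [[Exy] /List.filter_In [_ Hb']]]; subst y; by rewrite Hb in Hb'.
have HZ : subset_of Z (LA i) by move=> a /List.in_map_iff [x [<- _]].
have HX' : subset_of X' (fun x : A l => 0 < i /\ LA i.-1 x).
  rewrite /X'; case: ifP => Hl //= a /List.in_map_iff [x [<- _]]; split => //.
have HY' : subset_of Y' (fun x : A l => 0 < i /\ LA i.-1 x).
  rewrite /Y'; case: ifP => Hl //= a /List.in_map_iff [x [<- _]]; split => //.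
have HXY' : disjoint_lists X' Y'.
  rewrite /disjoint_lists /X' /Y'; case: ifP => Hl //= a /List.in_map_iff [x [<- /List.filter_In [_ Hb]]].
  move=> /List.in_map_iff [y [[Exy] /List.filter_In [_ Hb']]]; subst y; by rewrite Hb in Hb'.
have [z [Lz [HzZ [HzX [HzX' [HzY HzY']]]]]] := H4 i Hi X Y Z X' Y' HX HY HXY HZ HX' HY' HXY'.
rewrite /LA in Lz.
exists z.2; split.
  rewrite leqNgt; apply/negP => Hlt; apply: HzZ.
  apply/List.in_map_iff; exists z.2; split; first by apply: pairA_eq; rewrite /= ?Lz.
  apply/List.in_seq; lia.
move=> x Hx; split.
- move=> Hl; case Hb: (bitn s (2 * x)).
  + have Hin : List.In (o1, x) X.
      rewrite /X Hl; apply/List.in_map_iff; exists x; split => //.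
      apply/List.filter_In; split => //; apply/List.in_seq; lia.
    have [_ [_ Ha]] := HzX _ Hin; by rewrite -Lz.
  + have Hin : List.In (o1, x) Y.
      rewrite /Y Hl; apply/List.in_map_iff; exists x; split => //.
      apply/List.filter_In; split; [apply/List.in_seq; lia | by rewrite Hb].
    apply/negbTE/negP => Ha; apply: (HzY _ Hin); split; first lia.
    split; first by rewrite /= Ho1 // Lz.
    by rewrite Lz.
- move=> Hl; case Hb: (bitn s (2 * x).+1).
  + have Hin : List.In (om, x) X'.
      rewrite /X' Hl; apply/List.in_map_iff; exists x; split => //.
      apply/List.filter_In; split => //; apply/List.in_seq; lia.
    have [_ [_ Ha]] := HzX' _ Hin; by rewrite -Hom.
  + have Hin : List.In (om, x) Y'.
      rewrite /Y' Hl; apply/List.in_map_iff; exists x; split => //.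
      apply/List.filter_In; split; [apply/List.in_seq; lia | by rewrite Hb].
    apply/negbTE/negP => Ha; apply: (HzY' _ Hin); split; first by rewrite /= Hom; lia.
    split; first by rewrite /= Hom Lz; lia.
    by rewrite /= Hom.
Qed.


Definition psi' (l : nat) (psi : nat -> nat -> nat -> nat) a b c := psi (minn a (l - 2)) b c.

Definition bodyx l psi (E : env) : bool :=
  (((E 2 %% l).+1 < l) ==>
     (known (E 3) (psi' l psi (E 2 %% l) (E 1) (E 0)) &&
      (bitn (E 3) (psi' l psi (E 2 %% l) (E 1) (E 0)) == bitn (E 2 %/ l) (2 * E 0))))
  && ((0 < E 2 %% l) ==>
     (known (E 3) (psi' l psi (E 2 %% l).-1 (E 0) (E 1)) &&
      (bitn (E 3) (psi' l psi (E 2 %% l).-1 (E 0) (E 1)) == bitn (E 2 %/ l) (2 * E 0).+1))).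

Definition bodyn l psi (E : env) : bool :=
  (E 1 %/ l <= E 0) && all (fun x => bodyx l psi (scons x E)) (iota 0 (E 1 %/ l)).

Definition Rb l psi (E : env) : bool :=
  has (fun n => bodyn l psi (scons n E)) (iota 0 (E 1)).

Lemma CompB_beq N p q : CompB N p -> CompB N q -> CompB N (fun E => p E == q E).
Proof.
move=> Hp Hq; apply: Comp_eq (CompB_eq Hp Hq) _ => E; by case: (p E); case: (q E).
Qed.

Lemma CompB_known N c p : Comp N c -> Comp N p -> CompB N (fun E => known (c E) (p E)).
Proof. move=> Hc Hp; exact: CompB_leq (Comp_pow2 (Comp_succ Hp)) Hc. Qed.

Lemma CompB_bitn N c p : Comp N c -> Comp N p -> CompB N (fun E => bitn (c E) (p E)).
Proof.
move=> Hc Hp; apply: CompB_odd; apply: Comp_div Hc (Comp_pow2 Hp) _ => E; exact: expn_gt0.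
Qed.

Lemma CompB_Rb l psi ee : 0 < l ->
  (forall x y z, eval ee [:: x; y; z] (psi' l psi x y z)) -> CompB 2 (Rb l psi).
Proof.
move=> Hl Hee.
have Hbx : CompB 4 (bodyx l psi).
  have Hi : Comp 4 (fun E => E 2 %% l).
    by apply: Comp_mod (Comp_proj _) (Comp_const 4 l) _.
  have Hs : Comp 4 (fun E => E 2 %/ l).
    by apply: Comp_div (Comp_proj _) (Comp_const 4 l) _.
  have P1 : Comp 4 (fun E => psi' l psi (E 2 %% l) (E 1) (E 0)).
    by apply: Comp_ext3 Hee Hi (Comp_proj _) (Comp_proj _).
  have P2 : Comp 4 (fun E => psi' l psi (E 2 %% l).-1 (E 0) (E 1)).
    by apply: Comp_ext3 Hee (Comp_pred Hi) (Comp_proj _) (Comp_proj _).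
  have H2x : Comp 4 (fun E => 2 * E 0) by apply: Comp_mul (Comp_const 4 2) (Comp_proj _).
  have Hc : Comp 4 (fun E => E 3) by apply: Comp_proj.
  exact: (CompB_and
    (CompB_impl (CompB_leq (Comp_succ (Comp_succ Hi)) (Comp_const 4 l))
       (CompB_and (CompB_known Hc P1) (CompB_beq (CompB_bitn Hc P1) (CompB_bitn Hs H2x))))
    (CompB_impl (CompB_leq (Comp_const 4 1) Hi)
       (CompB_and (CompB_known Hc P2) (CompB_beq (CompB_bitn Hc P2) (CompB_bitn Hs (Comp_succ H2x)))))).
have Hbn : CompB 3 (bodyn l psi).
  have Hs : Comp 3 (fun E => E 1 %/ l).
    by apply: Comp_div (Comp_proj _) (Comp_const 3 l) _.
  exact: (CompB_and (CompB_leq Hs (Comp_proj _)) (CompB_all Hbx Hs)).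
exact: (CompB_has Hbn (Comp_proj _)).
Qed.


Lemma Good_R l psi alpha : 2 <= l -> Good l psi alpha ->
  forall k, exists m, Rb l psi (envof [:: k; prefix_code alpha m]).
Proof.
move=> Hl HG k.
have Hl0 : 0 < l by lia.
have Hi : k %% l < l by exact: ltn_pmod.
have [n [Hsn Hn]] := HG _ (k %/ l) Hi.
set i := k %% l in Hi Hn *; set s := k %/ l in Hsn Hn *.
pose F := fun x => psi' l psi i n x + psi' l psi i.-1 x n.
pose m := n.+1 + lb F (List.seq 0 s).
exists m.
have HFm : forall x, x < s -> F x < m.
  move=> x Hx; have := @lb_in _ F (List.seq 0 s) x.
  have Hin : List.In x (List.seq 0 s) by apply/List.in_seq; lia.
  move/(_ Hin); rewrite /m; lia.
set c := prefix_code alpha m.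
apply/hasP; exists n.
  rewrite mem_iota /= add0n.
  have := pc_bounds alpha m => /andP [H1 _].
  have Hnm : n < m by rewrite /m; lia.
  have := ltn_expl m (isT : 1 < 2); rewrite /envof /= /c; lia.
rewrite /bodyn /=; apply/andP; split => //.
apply/allP => x; rewrite mem_iota add0n => /andP [_ Hx].
have := HFm x Hx; rewrite /F => HF.
have [Hn1 Hn2] := Hn x Hx.
rewrite /bodyx /= -/i -/s; apply/andP; split; apply/implyP => Hl'.
- have Hp : psi' l psi i n x < m by lia.
  rewrite /known /c pc_known Hp /= /bitn pc_bit //.
  rewrite /psi' (_ : minn i (l - 2) = i); last lia.
  by rewrite Hn1.
- have Hp : psi' l psi i.-1 x n < m by lia.
  rewrite /known /c pc_known Hp /= /bitn pc_bit //.
  rewrite /psi' (_ : minn i.-1 (l - 2) = i.-1); last lia.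
  by rewrite Hn2.
Qed.

Lemma R_Good l psi alpha : 2 <= l ->
  (forall k, exists m, Rb l psi (envof [:: k; prefix_code alpha m])) -> Good l psi alpha.
Proof.
move=> Hl H i s Hi.
have Hl0 : 0 < l by lia.
have [m Hm] := H (s * l + i).
have Ei : (s * l + i) %% l = i by rewrite modnMDl modn_small.
have Es : (s * l + i) %/ l = s by rewrite divnMDl // divn_small // addn0.
move/hasP: Hm => [n _]; rewrite /bodyn /envof /= Es => /andP [Hsn /allP Hall].
exists n; split => // x Hx.
have := Hall x; rewrite mem_iota add0n Hx => /(_ isT).
rewrite /bodyx /= ?Ei ?Es => /andP [/implyP H1 /implyP H2]; split.
- move=> Hl'; have /andP [Hk /eqP Hb] := H1 Hl'.
  move: Hk Hb; rewrite /known /bitn pc_known => Hk; rewrite pc_bit //.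
  by rewrite /psi' (_ : minn i (l - 2) = i) //; lia.
- move=> Hl'; have /andP [Hk /eqP Hb] := H2 Hl'.
  move: Hk Hb; rewrite /known /bitn pc_known => Hk; rewrite pc_bit //.
  by rewrite /psi' (_ : minn i.-1 (l - 2) = i.-1) //; lia.
Qed.

Theorem lemma2 (l : nat) (psi : nat -> nat -> nat -> nat) :
  2 <= l -> recursive_bijection l psi ->
  Pi02 (fun alpha => model_T l (LA (l:=l)) (S_alpha psi alpha)).
Proof.
move=> Hl [[epsi Hepsi] _].
have [[em Hem] _] := Comp_minn (Comp_proj (N := 3) (i := 0) isT) (Comp_const 3 (l - 2)).
pose ee := RComp epsi [:: em; RProj 1; RProj 2].
have Hee : forall x y z, eval ee [:: x; y; z] (psi' l psi x y z).
  move=> x y z.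
  apply: (@ev_comp _ _ _ [:: minn x (l - 2); y; z]).
    constructor; first exact: (Hem [:: x; y; z]).
    constructor; first exact: (ev_proj 1 [:: x; y; z]).
    constructor; first exact: (ev_proj 2 [:: x; y; z]).
    constructor.
  apply: Hepsi; lia.
have [[e He] _] := CompB_neg (@CompB_Rb l psi ee (ltn_trans (isT : 0 < 1) Hl) Hee).
exists e; split.
  by move=> k c; eexists; exact: (He [:: k; c]).
move=> alpha; split.
- move=> HM k; have [m Hm] := Good_R Hl (model_Good Hl HM) k.
  exists m; have := He [:: k; prefix_code alpha m]; by rewrite Hm.
- move=> H; apply: Good_model => //; apply: R_Good => // k.
  have [m Hm] := H k; exists m.
  have := @eval_det _ _ _ (He [:: k; prefix_code alpha m]) _ Hm.
  by case: (Rb _ _ _).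
Qed.
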